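(* Consider the distributed quantized weight-balancing algorithm described in the context on a strongly connected digraph, with step-size $\gamma(k)=2^{-n}$ for $2^n-1\le k\le 2^{n+1}-2$. Then the sequence of weight matrices $\{\mathbf{A}(k)\}_{k\in\mathbb{Z}_+}$, $\mathbf{A}(k)=(a_{ij}(k))$, is bounded.
   Context: $\mathcal{G}=(\mathcal{V},\mathcal{E})$, $\mathcal{V}=\{1,\dots,N\}$, no self-loops, strongly connected; $\mathcal{N}_i^-=\{j:(j,i)\in\mathcal{E}\}$, $\mathcal{N}_i^+=\{j:(i,j)\in\mathcal{E}\}$, $d_i^+=|\mathcal{N}_i^+|$. Algorithm: $a_{ij}(0)=1$ if $j\in\mathcal{N}_i^-$ and $0$ otherwise; $b_i(k)=\sum_{j\in\mathcal{N}_i^-}a_{ij}(k)-\sum_{j\in\mathcal{N}_i^+}a_{ji}(k)$; $n_i(k)=1$ if $b_i(k)\ge d_i^+\gamma(k)$, else $0$; $a_{ij}(k+1)=a_{ij}(k)+n_j(k)\gamma(k)$ for $j\in\mathcal{N}_i^-$ (other entries remain $0$). *)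

(* Defs.v *)
From HB Require Import structures.
From mathcomp Require Import all_boot all_order all_algebra.
Set Implicit Arguments. Unset Strict Implicit. Unset Printing Implicit Defensive.
Import Order.TTheory GRing.Theory Num.Theory.
Local Open Scope ring_scope.

(* Digraph on vertices 'I_N given by a relation e : rel 'I_N;
   e j i means (j,i) is an edge, i.e. j \in N_i^- and i \in N_j^+. *)

Section Alg.
Variables (R : realFieldType) (N : nat) (e : rel 'I_N) (gamma : nat -> R).

Definition outdeg (i : 'I_N) : nat := #|[set j | e i j]|.

Definition imbalance (a : 'I_N -> 'I_N -> R) (i : 'I_N) : R :=
  \sum_(j | e j i) a i j - \sum_(j | e i j) a j i.

Definition nflag (a : 'I_N -> 'I_N -> R) (g : R) (i : 'I_N) : R :=
  if (outdeg i)%:R * g <= imbalance a i then 1 else 0.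

Fixpoint weights (k : nat) : 'I_N -> 'I_N -> R :=
  match k with
  | 0 => fun i j => if e j i then 1 else 0
  | k'.+1 =>
      let a := weights k' in
      fun i j => if e j i then a i j + nflag a (gamma k') j * gamma k' else 0
  end.
End Alg.

(* Main.v *)
Require Import Defs.
From HB Require Import structures.
From mathcomp Require Import all_boot all_order all_algebra.
From mathcomp Require Import ring lra zify.
Import Order.TTheory GRing.Theory Num.Theory.
Local Open Scope ring_scope.


Lemma gamma_bounds (R : realFieldType) (gamma : nat -> R)
  (Hgamma : forall n k : nat, (2 ^ n - 1 <= k <= 2 ^ n.+1 - 2)%N ->
              gamma k = (2%:R ^+ n)^-1) k :
  0 < gamma k /\ gamma k <= 1.
Proof.
have := @trunc_log_bounds 2 k.+1 isT isT => /= /andP[h1 h2].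
rewrite (Hgamma (trunc_log 2 k.+1)); last by apply/andP; split; lia.
have h : (1 : R) <= 2%:R ^+ trunc_log 2 k.+1 by apply: exprn_ege1; rewrite ler1n.
have h0 : (0 : R) < 2%:R ^+ trunc_log 2 k.+1 by apply: lt_le_trans h.
by split; [rewrite invr_gt0 | rewrite invf_le1].
Qed.

Definition nf (R : realFieldType) N (e : rel 'I_N) (gamma : nat -> R) k j :=
  nflag e (weights e gamma k) (gamma k) j.
Arguments nf {R N}.

Fixpoint w (R : realFieldType) N (e : rel 'I_N) (gamma : nat -> R) k (j : 'I_N) : R :=
  match k with 0 => 1 | k'.+1 => @w R N e gamma k' j + @nf R N e gamma k' j * gamma k' end.
Arguments w {R N}.

Fixpoint fired (R : realFieldType) N (e : rel 'I_N) (gamma : nat -> R) k (j : 'I_N) : bool :=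
  match k with 0 => false | k'.+1 => @fired R N e gamma k' j || (@nf R N e gamma k' j == 1) end.
Arguments fired {R N}.

Definition imb (R : realFieldType) N (e : rel 'I_N) (gamma : nat -> R) k i :=
  imbalance e (weights e gamma k) i.
Arguments imb {R N}.

Lemma weightsE (R : realFieldType) N (e : rel 'I_N) (gamma : nat -> R) k i j :
  weights e gamma k i j = if e j i then w e gamma k j else 0.
Proof.
elim: k i j => [|k IH] i j /=; first by [].
rewrite IH; case: (e j i) => //.
Qed.

Set Implicit Arguments. Unset Strict Implicit.

Lemma nfP (R : realFieldType) N (e : rel 'I_N) (gamma : nat -> R) k i :
  (nf e gamma k i = 1 /\ (outdeg e i)%:R * gamma k <= imb e gamma k i) \/
  (nf e gamma k i = 0 /\ imb e gamma k i < (outdeg e i)%:R * gamma k).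
Proof.
rewrite /nf /nflag /imb; case: ifP => h; [left | right]; split => //.
by rewrite ltNge h.
Qed.

Lemma nf_ge0 (R : realFieldType) N (e : rel 'I_N) (gamma : nat -> R) k i :
  0 <= nf e gamma k i <= 1.
Proof. by case: (nfP e gamma k i) => [[-> _]|[-> _]]; rewrite ?lexx ?ler01. Qed.

Lemma w_ge1 (R : realFieldType) N (e : rel 'I_N) (gamma : nat -> R)
  (hg : forall k, 0 < gamma k) k j : 1 <= w e gamma k j.
Proof.
elim: k => [|k IH] /=; first by [].
have := nf_ge0 e gamma k j => /andP[h0 _].
have := hg k => hk.
have : 0 <= nf e gamma k j * gamma k by rewrite mulr_ge0 // ltW.
lra.
Qed.

Lemma outdeg_le (N : nat) (e : rel 'I_N) i : (outdeg e i <= N)%N.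
Proof. by rewrite /outdeg -[X in (_ <= X)%N]card_ord max_card. Qed.

Lemma imbE (R : realFieldType) N (e : rel 'I_N) (gamma : nat -> R) k i :
  imb e gamma k i = \sum_(j | e j i) w e gamma k j - (outdeg e i)%:R * w e gamma k i.
Proof.
rewrite /imb /imbalance.
rewrite (eq_bigr (fun j => w e gamma k j)); last by move=> j hj; rewrite weightsE hj.
rewrite [X in _ - X](eq_bigr (fun j => w e gamma k i)); last by move=> j hj; rewrite weightsE hj.
congr (_ - _).
rewrite sumr_const /outdeg cardsE mulr_natl.
by [].
Qed.

Lemma sum_imb (R : realFieldType) N (e : rel 'I_N) (gamma : nat -> R) k :
  \sum_i imb e gamma k i = 0.
Proof.
rewrite /imb /imbalance sumrB.
rewrite [X in _ - X](exchange_big_dep xpredT) //=.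
by rewrite subrr.
Qed.

Lemma imb_step (R : realFieldType) N (e : rel 'I_N) (gamma : nat -> R) k i :
  imb e gamma k.+1 i = imb e gamma k i + gamma k *
     (\sum_(j | e j i) nf e gamma k j - (outdeg e i)%:R * nf e gamma k i).
Proof.
rewrite !imbE /= big_split /= -mulr_suml.
ring.
Qed.

Lemma fired_nonneg (R : realFieldType) N (e : rel 'I_N) (gamma : nat -> R)
  (hg : forall k, 0 < gamma k) k i : fired e gamma k i -> 0 <= imb e gamma k i.
Proof.
elim: k => [|k IH] //=.
have hS : 0 <= \sum_(j | e j i) nf e gamma k j.
  by apply: sumr_ge0 => j _; have /andP[] := nf_ge0 e gamma k j.
have hk := hg k.
have hS' : 0 <= gamma k * \sum_(j | e j i) nf e gamma k j by rewrite mulr_ge0 // ltW.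
rewrite imb_step mulrBr.
case: (nfP e gamma k i) => [[-> h]|[-> h]].
  move=> _; rewrite mulr1.
  have : (outdeg e i)%:R * gamma k = gamma k * (outdeg e i)%:R by rewrite mulrC.
  lra.
rewrite (_ : (0:R) == 1 = false) ?orbF; last by rewrite eq_sym oner_eq0.
move=> /IH h2.
lra.
Qed.

Lemma unfired_w (R : realFieldType) N (e : rel 'I_N) (gamma : nat -> R) k i :
  ~~ fired e gamma k i -> w e gamma k i = 1.
Proof.
elim: k => [|k IH] //=.
rewrite negb_or => /andP[/IH -> h].
case: (nfP e gamma k i) => [[h1 _]|[-> _]]; last by rewrite mul0r addr0.
by rewrite h1 eqxx in h.
Qed.

Lemma w_ge0 (R : realFieldType) N (e : rel 'I_N) (gamma : nat -> R)
  (hg : forall k, 0 < gamma k) k j : 0 <= w e gamma k j.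
Proof. exact: le_trans ler01 (w_ge1 e hg k j). Qed.

Lemma imb_lb (R : realFieldType) N (e : rel 'I_N) (gamma : nat -> R)
  (hg : forall k, 0 < gamma k) k i : - (N%:R) <= imb e gamma k i.
Proof.
have hN : (0:R) <= N%:R by rewrite ler0n.
case: (boolP (fired e gamma k i)) => h.
  have := fired_nonneg hg h; lra.
rewrite imbE unfired_w // mulr1.
have hS : 0 <= \sum_(j | e j i) w e gamma k j.
  by apply: sumr_ge0 => j _; apply: w_ge0.
have hd : (outdeg e i)%:R <= N%:R :> R by rewrite ler_nat outdeg_le.
lra.
Qed.

Lemma imb_ub (R : realFieldType) N (e : rel 'I_N) (gamma : nat -> R)
  (hg : forall k, 0 < gamma k) k i : imb e gamma k i <= N%:R * N%:R.
Proof.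
have hs : \sum_j (imb e gamma k j + N%:R) = N%:R * N%:R.
  by rewrite big_split /= sum_imb add0r sumr_const card_ord mulr_natl.
have : imb e gamma k i + N%:R <= \sum_j (imb e gamma k j + N%:R).
  rewrite (bigD1 i) //= lerDl.
  apply: sumr_ge0 => j _; have := imb_lb e hg k j; lra.
have hN : (0:R) <= N%:R by rewrite ler0n.
lra.
Qed.

Lemma prop_edge (R : realFieldType) N (e : rel 'I_N) (gamma : nat -> R)
  (hg : forall k, 0 < gamma k) k u v : e u v ->
  w e gamma k u <= N%:R * N%:R + N%:R * w e gamma k v.
Proof.
move=> huv.
have h1 : w e gamma k u <= \sum_(j | e j v) w e gamma k j.
  rewrite (bigD1 u) //= lerDl.
  by apply: sumr_ge0 => j _; apply: w_ge0.
have h2 := imb_ub e hg k v.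
rewrite imbE in h2.
have hd : (outdeg e v)%:R * w e gamma k v <= N%:R * w e gamma k v.
  by rewrite ler_wpM2r ?w_ge0 // ler_nat outdeg_le.
lra.
Qed.

Definition gg (R : realFieldType) (N : nat) (x : R) : R := N%:R * N%:R + N%:R * x.

Lemma gg_mono (R : realFieldType) N (x y : R) : x <= y -> gg N x <= gg N y.
Proof. by move=> h; rewrite /gg lerD2l ler_wpM2l ?ler0n. Qed.

Lemma iter_mono (R : realFieldType) N n (x y : R) :
  x <= y -> iter n (gg N) x <= iter n (gg N) y.
Proof. by elim: n => [|n IH] //= h; apply: gg_mono; apply: IH. Qed.

Lemma iter_ge (R : realFieldType) N n (y : R) : (0 < N)%N -> 0 <= y ->
  y <= iter n (gg N) y.
Proof.
move=> hN hy; elim: n => [|n IH] //=.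
have h0 : 0 <= iter n (gg N) y by apply: le_trans hy IH.
apply: le_trans IH _.
have h1 : (1 : R) <= N%:R by rewrite ler1n.
rewrite /gg.
have : iter n (gg N) y <= N%:R * iter n (gg N) y.
  by rewrite ler_peMl.
have : (0:R) <= N%:R * N%:R by rewrite mulr_ge0 ?ler0n.
lra.
Qed.

Lemma path_bound (R : realFieldType) N (e : rel 'I_N) (gamma : nat -> R)
  (hg : forall k, 0 < gamma k) k p : forall u, path e u p ->
  w e gamma k u <= iter (size p) (gg N) (w e gamma k (last u p)).
Proof.
elim: p => [|x p IH] u /=; first by [].
move=> /andP[hux hp].
have h := IH x hp.
apply: (le_trans (prop_edge hg k hux)).
exact: (gg_mono N h).
Qed.

Lemma unfired_bound (R : realFieldType) N (e : rel 'I_N) (gamma : nat -> R)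
  (hg : forall k, 0 < gamma k) (Hsc : forall i j : 'I_N, connect e i j) k z :
  ~~ fired e gamma k z -> forall u, w e gamma k u <= iter N (gg N) 1.
Proof.
move=> hz u.
have hN : (0 < N)%N by apply: leq_ltn_trans (leq0n u) (ltn_ord u).
have /connectP [p hp hl] := Hsc u z.
case: (shortenP hp) hl => p' hp' hu _ hl.
have := path_bound hg k hp'; rewrite -hl (unfired_w hz).
move=> h; apply: (le_trans h).
have hs : (size p' < N)%N.
  have := max_card (mem (u :: p')); rewrite card_ord.
  by move/card_uniqP: hu => -> /=.
have -> : iter N (gg N) (1:R) = iter (size p') (gg N) (iter (N - size p') (gg N) 1).
  by rewrite -iterD subnKC // ltnW.
apply: iter_mono; apply: iter_ge => //; exact: ler01.
Qed.

Theorem lemma4 (R : realFieldType) (N : nat) (e : rel 'I_N) (gamma : nat -> R)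
  (Hirr : forall i : 'I_N, ~~ e i i)
  (Hsc : forall i j : 'I_N, connect e i j)
  (Hgamma : forall n k : nat, (2 ^ n - 1 <= k <= 2 ^ n.+1 - 2)%N ->
              gamma k = (2%:R ^+ n)^-1) :
  exists M : R, forall (k : nat) (i j : 'I_N), `|weights e gamma k i j| <= M.
Proof.
have hg : forall k, 0 < gamma k by move=> k; case: (@gamma_bounds _ _ Hgamma k).
have hg1 : forall k, gamma k <= 1 by move=> k; case: (@gamma_bounds _ _ Hgamma k).
set C := iter N (gg N) (1 : R).
have main : forall k j, (exists i, e j i) -> w e gamma k j <= C + 1.
  elim=> [|k IH] j [i hji].
    have hN : (0 < N)%N by apply: leq_ltn_trans (leq0n j) (ltn_ord j).
    have : (1 : R) <= C by apply: iter_ge => //; exact: ler01.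
    rewrite /=; lra.
  case: (boolP [exists z, ~~ fired e gamma k.+1 z]) => [/existsP [z hz]|hall].
    have := unfired_bound hg Hsc hz j; rewrite -/C; lra.
  case: (boolP [exists z, ~~ fired e gamma k z]) => [/existsP [z hz]|hall0].
    have h1 := unfired_bound hg Hsc hz j; rewrite -/C in h1.
    have /andP[h0 h2] := nf_ge0 e gamma k j.
    have h3 : nf e gamma k j * gamma k <= 1.
      by rewrite mulr_ile1 // ltW.
    rewrite /=; lra.
  have hz : forall z, imb e gamma k z = 0.
    move=> z; apply: (psumr_eq0P (P := xpredT)) => //; last exact: sum_imb.
    move=> y _; apply: (fired_nonneg hg).
    by apply: contraR hall0 => hy; apply/existsP; exists y.
  have hd : (0 < outdeg e j)%N by rewrite /outdeg card_gt0; apply/set0Pn; exists i; rewrite inE.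
  case: (nfP e gamma k j) => [[_ h]|[h0 _]].
    rewrite hz in h.
    have : 0 < (outdeg e j)%:R * gamma k by rewrite mulr_gt0 ?ltr0n.
    lra.
  by rewrite /= h0 mul0r addr0; apply: IH; exists i.
exists (C + 1) => k i j.
rewrite weightsE; case: ifP => h.
  rewrite ger0_norm; last exact: w_ge0.
  by apply: main; exists i.
rewrite normr0.
have hN : (0 < N)%N by apply: leq_ltn_trans (leq0n j) (ltn_ord j).
have : (1 : R) <= C by apply: iter_ge => //; exact: ler01.
lra.
Qed.
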